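(* For every ordinal $\beta\leq\omega_1$, in $\mathbb{S}(\beta)$ we have $\sigma(\llbracket\mathcal{L}\rrbracket)\subseteq\Lambda$, where $\Lambda=\{A\subseteq I\times\beta: A_0\in\mathcal{B}(I)\text{ and }A_\alpha\in\{\emptyset,I\}\text{ for all }0<\alpha<\beta\}$.
   Context: An LMP is $(S,\Sigma,\{\tau_a\}_{a\in L})$ with $L$ countable and Markov kernels $\tau_a$. The logic $\mathcal{L}$ has formulas $\phi::=\top\mid\phi\wedge\psi\mid\langle a\rangle_{>q}\phi$ ($a\in L$, $q\in\mathbb{Q}\cap[0,1]$) with $\llbracket\top\rrbracket=S$, $\llbracket\phi\wedge\psi\rrbracket=\llbracket\phi\rrbracket\cap\llbracket\psi\rrbracket$, $\llbracket\langle a\rangle_{>q}\phi\rrbracket=\{s:\tau_a(s,\llbracket\phi\rrbracket)>q\}$; $\sigma(\llbracket\mathcal{L}\rrbracket)$ is the $\sigma$-algebra generated by all $\llbracket\phi\rrbracket$. The processes $\mathbb{S}(\beta)$: $I=(0,1)$, $\mathfrak{m}$ Lebesgue measure, $V\subseteq I$ Lebesgue nonmeasurable, $\mathcal{B}_V=\sigma(\mathcal{B}(I)\cup\{V\})$, and $\mathfrak{m}_0,\mathfrak{m}_1$ measures on $\mathcal{B}_V$ extending $\mathfrak{m}$ with $\mathfrak{m}_0(V)\neq\mathfrak{m}_1(V)$. Let $\{q_n\}_{n\in\omega}$ enumerate $\mathbb{Q}\cap I$. For ordinals $\eta$: $\alpha_n(0)=0$, $\alpha_n(\zeta+1)=\zeta$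 for all $n$, and for limit $\lambda$, $(\alpha_n(\lambda))_{n\in\omega}$ is a fixed strictly increasing sequence of nonzero ordinals below $\lambda$ cofinal in $\lambda$. For an ordinal $\beta\leq\omega_1$, $\mathbb{S}(\beta)=(I\times\beta,\ \mathcal{B}_V\otimes\mathcal{P}(\beta),\ \{\tau_n\}_{n\in\omega})$ with $\tau_n((x,\eta),A)=x\cdot\mathfrak{m}_0(A_0)$ if $\eta=0$; $=\mathfrak{m}_0(A_{\alpha_n(\eta)})$ if $\eta>0$ and $x<q_n$; $=\mathfrak{m}_1(A_{\alpha_n(\eta)})$ if $\eta>0$ and $x\geq q_n$; here $A_\gamma=\{r:(r,\gamma)\in A\}$. These $\tau_n$ are Markov kernels, so $\mathbb{S}(\beta)$ is an LMP. *)

(* Defs.v *)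
From HB Require Import structures.
From mathcomp Require Import all_boot all_order all_algebra.
From mathcomp Require Import all_classical all_reals all_analysis.

Unset Strict Implicit.
Unset Printing Implicit Defensive.
Import Order.TTheory GRing.Theory Num.Theory.
Import numFieldNormedType.Exports.

Local Open Scope classical_set_scope.
Local Open Scope ring_scope.

(* An ordinal beta is represented by the type B of its elements        *)
(* (the ordinals < beta) with its strict order lt.  beta <= omega_1    *)
(* iff every proper initial segment {xi | xi < eta} is countable.      *)

Definition is_ordinal_le_omega1 (B : Type) (lt : B -> B -> Prop) : Prop :=
  [/\ (forall x, ~ lt x x),
      (forall x y z, lt x y -> lt y z -> lt x z),
      (forall x y, [\/ lt x y, x = y | lt y x]),
      well_founded lt &
      (forall eta, countable [set xi | lt xi eta])].

Definition is_zero (B : Type) (lt : B -> B -> Prop) (eta : B) : Prop :=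
  forall xi, ~ lt xi eta.

Definition is_succ_of (B : Type) (lt : B -> B -> Prop) (eta zeta : B) : Prop :=
  lt zeta eta /\ forall xi, lt zeta xi -> lt xi eta -> False.

Definition is_limit (B : Type) (lt : B -> B -> Prop) (eta : B) : Prop :=
  ~ is_zero B lt eta /\ forall zeta, ~ is_succ_of B lt eta zeta.

Definition alpha_spec (B : Type) (lt : B -> B -> Prop) (alpha : nat -> B -> B)
  : Prop :=
  [/\ (forall n eta, is_zero B lt eta -> alpha n eta = eta),
      (forall n eta zeta, is_succ_of B lt eta zeta -> alpha n eta = zeta) &
      (forall lam, is_limit B lt lam ->
         [/\ (forall n, lt (alpha n lam) (alpha n.+1 lam)),
             (forall n, lt (alpha n lam) lam),
             (forall n, ~ is_zero B lt (alpha n lam)) &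
             (forall xi, lt xi lam -> exists n, lt xi (alpha n lam))])].

Definition Iunit (R : realType) : set R := `]0, 1[%classic.

(* Lebesgue measurability: Caratheodory measurability w.r.t. the outer
   Lebesgue measure (this is the completed Lebesgue sigma-algebra). *)
Definition lebesgue_measurable (R : realType) (A : set R) : Prop :=
  (@wlength R idfun)^*%mu.-cara.-measurable A.

Definition borel_I (R : realType) : set (set R) :=
  [set A : set R | measurable A /\ A `<=` Iunit R].

Definition B_V (R : realType) (V : set R) : set (set R) :=
  <<s Iunit R, borel_I R `|` [set V] >>.

Definition is_measure_on (R : realType) (S : set (set R))
  (mu : set R -> \bar R) : Prop :=
  [/\ mu set0 = 0%E,
      (forall A, S A -> (0 <= mu A)%E) &
      (forall F : (set R)^nat, (forall n, S (F n)) -> trivIset setT F ->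
         ((fun n => \sum_(0 <= k < n) mu (F k))%E @ \oo --> mu (\bigcup_n F n)))].

Definition extends_lebesgue (R : realType) (mu : set R -> \bar R) : Prop :=
  forall A, borel_I R A -> mu A = lebesgue_measure A.

Definition rat01 := {q : rat | (0 <= q <= 1)%R}.

Inductive formula (L : Type) : Type :=
| FTop : formula L
| FAnd : formula L -> formula L -> formula L
| FDiam : L -> rat01 -> formula L -> formula L.

Fixpoint sem (R : realType) (T L : Type) (D : set T)
  (tau : L -> T -> set T -> \bar R) (phi : formula L) : set T :=
  match phi with
  | FTop => D
  | FAnd phi psi => sem R T L D tau phi `&` sem R T L D tau psi
  | FDiam a q phi =>
      [set s | D s /\ ((ratr (sval q))%:E < tau a s (sem R T L D tau phi))%E]
  end.

Definition sigma_sem (R : realType) (T L : Type) (D : set T)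
  (tau : L -> T -> set T -> \bar R) : set (set T) :=
  <<s D, [set sem R T L D tau phi | phi in [set: formula L]] >>.

Definition section (R : realType) (B : Type) (A : set (R * B)) (g : B)
  : set R := [set r | A (r, g)].

Definition Sstates (R : realType) (B : Type) : set (R * B) :=
  [set s | Iunit R s.1].

Definition Stau (R : realType) (B : Type) (lt : B -> B -> Prop)
  (alpha : nat -> B -> B) (q : nat -> rat) (m0 m1 : set R -> \bar R)
  (n : nat) (s : R * B) (A : set (R * B)) : \bar R :=
  let x := s.1 in let eta := s.2 in
  if `[< is_zero B lt eta >] then (x%:E * m0 (section R B A eta))%E
  else if x < ratr (q n) then m0 (section R B A (alpha n eta))
  else m1 (section R B A (alpha n eta)).

Definition Lambda (R : realType) (B : Type) (lt : B -> B -> Prop)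
  : set (set (R * B)) :=
  [set A | [/\ A `<=` Sstates R B,
             (forall g, is_zero B lt g -> borel_I R (section R B A g)) &
             (forall g, ~ is_zero B lt g ->
                section R B A g = set0 \/ section R B A g = Iunit R)]].

Arguments FTop {L}.

(* Main.v *)
Require Import Defs.
From HB Require Import structures.
From mathcomp Require Import all_boot all_order all_algebra.
From mathcomp Require Import all_classical all_reals all_analysis.
From mathcomp Require Import measurable_realfun.
Import Order.TTheory GRing.Theory Num.Theory.
Import numFieldNormedType.Exports.
Local Open Scope classical_set_scope.
Local Open Scope ring_scope.

Lemma Iunit_meas (R : realType) : measurable (Iunit R).
Proof. exact: measurable_itv. Qed.

Lemma borel_set0 (R : realType) : borel_I R set0.
Proof. by split. Qed.

Lemma borel_Iunit (R : realType) : borel_I R (Iunit R).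
Proof. split; [exact: Iunit_meas|by []]. Qed.

Lemma Lambda_borel (R : realType) (B : Type) (lt : B -> B -> Prop) A g :
  Lambda R B lt A -> borel_I R (section R B A g).
Proof.
case=> _ hz hnz.
have [/hz //|/hnz [->|->]] := pselect (is_zero B lt g).
- exact: borel_set0.
- exact: borel_Iunit.
Qed.

Lemma Lambda_sigma (R : realType) (B : Type) (lt : B -> B -> Prop) :
  sigma_algebra (Sstates R B) (Lambda R B lt).
Proof.
split.
- split => //; first by move=> g _; exact: borel_set0.
  by move=> g _; left.
- move=> A [AD hz hnz]; split.
  + by move=> x [].
  + move=> g /hz [mA sA]; split.
    * have -> : section R B (Sstates R B `\` A) g = Iunit R `\` section R B A g.
        by apply/seteqP; split => x /=.
      exact: measurableD (Iunit_meas R) mA.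
    * by move=> x [].
  + move=> g /hnz [eA|eA].
    * right; apply/seteqP; split => x /=; first by case.
      by move=> Ix; split => // Ax; have : section R B A g x by []; rewrite eA.
    * left; apply/seteqP; split => x //= [Ix Ax]; apply: Ax.
      by have : section R B A g x by rewrite eA.
- move=> F hF; split.
  + by move=> x [n _ Fx]; case: (hF n) => + _ _; apply.
  + move=> g gz.
    have -> : section R B (\bigcup_k F k) g = \bigcup_k section R B (F k) g.
      by apply/seteqP; split => x /=.
    split.
    * by apply: bigcupT_measurable => n; case: (hF n) => _ /(_ g gz) [].
    * move=> x [n _ Fx]; case: (hF n) => _ /(_ g gz) [_ S] _. exact: (S x Fx).
  + move=> g gz.
    have -> : section R B (\bigcup_k F k) g = \bigcup_k section R B (F k) g.
      by apply/seteqP; split => x /=.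
    have [[n Fn]|nF] := pselect (exists n, section R B (F n) g = Iunit R).
    * right; apply/seteqP; split.
      -- by move=> x [k _ Fk]; case: (hF k) => FD _ _; exact: (FD (x, g) Fk).
      -- by move=> x Ix; exists n => //; rewrite /= Fn.
    * left; apply/seteqP; split => // x [k _ Fk].
      case: (hF k) => _ _ /(_ g gz) [Fe|Fe].
      -- by have : section R B (F k) g x by []; rewrite Fe.
      -- by exfalso; apply: nF; exists k.
Qed.

Theorem lemma5p4 (R : realType) (V : set R) (m0 m1 : set R -> \bar R)
  (q : nat -> rat) (B : Type) (lt : B -> B -> Prop) (alpha : nat -> B -> B) :
  V `<=` Iunit R -> ~ lebesgue_measurable R V ->
  is_measure_on R (B_V R V) m0 -> is_measure_on R (B_V R V) m1 ->
  extends_lebesgue R m0 -> extends_lebesgue R m1 -> m0 V <> m1 V ->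
  injective q -> range q = [set r : rat | 0 < r < 1] ->
  is_ordinal_le_omega1 B lt -> alpha_spec B lt alpha ->
  sigma_sem R (R * B) nat (Sstates R B) (Stau R B lt alpha q m0 m1) `<=` Lambda R B lt.
Proof.
move=> _ _ _ _ e0 e1 _ _ _ _ _.
apply: smallest_sub; first exact: Lambda_sigma.
move=> _ [phi _ <-].
elim: phi => [|p1 IH1 p2 IH2|a r p IH] /=.
- split => //; last by move=> g _; right.
  by move=> g _; exact: borel_Iunit.
- case: IH1 => D1 z1 n1; case: IH2 => D2 z2 n2; split.
  + by move=> x [/D1].
  + move=> g gz; case: (z1 g gz) => m1' s1; case: (z2 g gz) => m2' s2.
    split; first exact: measurableI.
    by move=> x [/s1].
  + move=> g gz; have -> : forall (X Y : set (R * B)), section R B (X `&` Y) g = section R B X g `&` section R B Y g by [].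
    by case: (n1 g gz) => ->; case: (n2 g gz) => ->; rewrite ?set0I ?setI0 ?setIid; auto.
- set A := sem _ _ _ _ _ p.
  split.
  + by move=> x [].
  + move=> g gz.
    have hz : `[< is_zero B lt g >] = true by apply/asboolP.
    set c := m0 (section R B A g).
    have mf : measurable_fun (Iunit R) ((fun x : R => (c * x%:E)%E) : R -> \bar R).
      by apply: measurable_funeM; apply/measurable_EFinP; exact: measurable_id.
    have := mf (Iunit_meas R) _ (emeasurable_itv `](ratr (sval r))%:E, +oo[).
    move=> mS; split; last by move=> x [].
    set S := (X in measurable X) in mS.
    have -> : section R B [set s | Sstates R B s /\
            ((ratr (sval r))%:E < Stau R B lt alpha q m0 m1 a s A)%E] g = S.
      apply/seteqP; split => x /=; rewrite /section /Stau /= hz;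
        rewrite /S /=.
      - by move=> [Ix H]; split => //=; rewrite in_itv /= andbT muleC.
      - by move=> [Ix]; rewrite /= in_itv /= andbT muleC.
    by [].
  + move=> g gz.
    have hz : `[< is_zero B lt g >] = false by apply/asboolP.
    have eq01 : m0 (section R B A (alpha a g)) = m1 (section R B A (alpha a g)).
      have bA := @Lambda_borel R B lt _ (alpha a g) IH.
      by rewrite e0 // e1.
    have [P|nP] := pselect ((ratr (sval r))%:E < m0 (section R B A (alpha a g)))%E.
    * right; apply/seteqP; split => x /=; first by case.
      move=> Ix; split => //; rewrite /Stau /= hz.
      by case: ifP => _; rewrite -?eq01.
    * left; apply/seteqP; split => x //= [Ix]; rewrite /Stau /= hz.
      by case: ifP => _; rewrite -?eq01.
Qed.
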